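(* Let $(x^*,y^* )$ be an optimal solution of the LP relaxation of an FTFP instance $\mathcal I$ which is complete (i.e. $x^*_{ij}\in\{0,y^*_i\}$ for all $i,j$) and satisfies $\sum_{i\in F}x^*_{ij}=r_j$ for all $j\in C$. Fix $\bar r$ with $1\le \bar r\le \min_{j\in C} r_j$. Define for all $i\in F$, $j\in C$: $$\hat y_i=\max\{\lfloor y^*_i-\bar r\rfloor,0\},\quad \hat x_{ij}=\max\{\lfloor x^*_{ij}-\bar r\rfloor,0\},\quad \dot y_i=y^*_i-\hat y_i,\quad \dot x_{ij}=x^*_{ij}-\hat x_{ij}.$$ Let $\hat{\mathcal I}$ (resp. $\dot{\mathcal I}$) be the FTFP instance with the same facilities, clients, opening costs and connection costs as $\mathcal I$, but with requirements $\hat r_j=\sum_{i\in F}\hat x_{ij}$ (resp. $\dot r_j=\sum_{i\in F}\dot x_{ij}$). Then: (i) $(\hat x,\hat y)$ is a feasible integral solution of $\hat{\mathcal I}$; (ii) $(\dot x,\dot y)$ is a feasible fractional solution of the LP relaxation of $\dot{\mathcal I}$; (iii) $(\hat x,\hat y)$ and $(\dot x,\dot y)$ are optimal solutions of the LP relaxations of $\hat{\mathcal I}$ and $\dot{\mathcal I}$, respectively; (iv) for every $j\in C$, $\bar r\le \dot r_j\le (\bar r+1)\,|F|$.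
   Context: Metric Fault-Tolerant Facility Placement (FTFP): a finite set $F$ of facilities with opening costs $f_i\ge 0$, a finite set $C$ of clients with requirements $r_j$, and metric connection costs $c_{ij}$; each facility may be opened any number of times (cost $f_i$ per copy) and each client $j$ must be connected to $r_j$ open copies. Its LP relaxation is: minimize $\sum_{i,j}c_{ij}x_{ij}+\sum_i f_iy_i$ subject to $\sum_{i\in F}x_{ij}\ge r_j$ for all $j$, $y_i-x_{ij}\ge 0$ for all $i,j$, $x,y\ge 0$. A feasible integral solution is a feasible LP solution with integer entries. *)

(* Defs.v *)
From HB Require Import structures.
From mathcomp Require Import all_boot all_order all_algebra.
Set Implicit Arguments. Unset Strict Implicit. Unset Printing Implicit Defensive.
Import Order.TTheory GRing.Theory Num.Theory.
Local Open Scope ring_scope.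

Section FTFP.
Variables (R : archiRealFieldType) (F C : finType).

Definition ftfp_metric (c : F -> C -> R) : Prop :=
  exists d : (F + C)%type -> (F + C)%type -> R,
    [/\ forall u v, 0 <= d u v,
        forall u, d u u = 0,
        forall u v, d u v = d v u,
        forall u v w, d u w <= d u v + d v w
      & forall i j, c i j = d (inl i) (inr j)].

Definition ftfp_cost (f : F -> R) (c : F -> C -> R)
    (x : F -> C -> R) (y : F -> R) : R :=
  \sum_(i : F) \sum_(j : C) c i j * x i j + \sum_(i : F) f i * y i.

Definition ftfp_lp_feasible (r : C -> R) (x : F -> C -> R) (y : F -> R) : Prop :=
  [/\ forall j, r j <= \sum_(i : F) x i j,
      forall i j, 0 <= y i - x i j,
      forall i j, 0 <= x i j
    & forall i, 0 <= y i].

Definition ftfp_lp_optimal (f : F -> R) (c : F -> C -> R) (r : C -> R)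
    (x : F -> C -> R) (y : F -> R) : Prop :=
  ftfp_lp_feasible r x y /\
  forall x' y', ftfp_lp_feasible r x' y' -> ftfp_cost f c x y <= ftfp_cost f c x' y'.

Definition ftfp_integral_feasible (r : C -> R) (x : F -> C -> R) (y : F -> R) : Prop :=
  ftfp_lp_feasible r x y /\
  (forall i j, x i j \is a Num.int) /\ (forall i, y i \is a Num.int).

Definition ftfp_complete (x : F -> C -> R) (y : F -> R) : Prop :=
  forall i j, x i j = 0 \/ x i j = y i.

Definition hat_part (rbar v : R) : R := Num.max (Num.floor (v - rbar))%:~R 0.

End FTFP.

(* Main.v *)
Require Import Defs.
From HB Require Import structures.
From mathcomp Require Import all_boot all_order all_algebra.
From mathcomp Require Import lra.
Import Order.TTheory GRing.Theory Num.Theory.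
Local Open Scope ring_scope.

Section Helpers.
Variables (R : archiRealFieldType) (F C : finType).

Lemma cost_split (f : F -> R) (c : F -> C -> R) x y a ya b yb :
  (forall i j, x i j = a i j + b i j) -> (forall i, y i = ya i + yb i) ->
  ftfp_cost f c x y = ftfp_cost f c a ya + ftfp_cost f c b yb.
Proof.
move=> hx hy; rewrite /ftfp_cost.
have -> : \sum_i \sum_j c i j * x i j =
  \sum_i \sum_j c i j * a i j + \sum_i \sum_j c i j * b i j.
  rewrite -big_split; apply: eq_bigr => i _; rewrite -big_split.
  by apply: eq_bigr => j _; rewrite hx mulrDr.
have -> : \sum_i f i * y i = \sum_i f i * ya i + \sum_i f i * yb i.
  by rewrite -big_split; apply: eq_bigr => i _; rewrite hy mulrDr.
by rewrite !addrA; congr (_ + _); rewrite -!addrA; congr (_ + _); rewrite addrC.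
Qed.

Lemma opt_split (f : F -> R) (c : F -> C -> R) r ra x y a ya b yb :
  (forall i j, x i j = a i j + b i j) -> (forall i, y i = ya i + yb i) ->
  ftfp_lp_optimal f c r x y -> ftfp_lp_feasible ra a ya ->
  (forall j, r j <= ra j + \sum_i b i j) ->
  (forall i j, 0 <= yb i - b i j) -> (forall i j, 0 <= b i j) ->
  (forall i, 0 <= yb i) -> ftfp_lp_optimal f c ra a ya.
Proof.
move=> hx hy [_ hopt] ha hr hb1 hb2 hb3; split => // x' y' [h1 h2 h3 h4].
have := hopt (fun i j => x' i j + b i j) (fun i => y' i + yb i).
rewrite (@cost_split f c x y a ya b yb hx hy).
rewrite (@cost_split f c (fun i j => x' i j + b i j) (fun i => y' i + yb i)
   x' y' b yb) //.
rewrite lerD2r; apply; split.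
- move=> j; rewrite big_split /=; apply: le_trans (hr j) _.
  by rewrite lerD2r.
- move=> i j; have := addr_ge0 (h2 i j) (hb1 i j).
  by rewrite opprD addrACA.
- by move=> i j; rewrite addr_ge0.
- by move=> i; rewrite addr_ge0.
Qed.

Variable rbar : R.
Hypothesis hr1 : 1 <= rbar.

Lemma rbar_gt0 : 0 < rbar.
Proof. exact: lt_le_trans ltr01 hr1. Qed.

Lemma hat_ge0 v : 0 <= hat_part rbar v.
Proof. by rewrite /hat_part le_max lexx orbT. Qed.

Lemma hat_le v : 0 <= v -> hat_part rbar v <= v.
Proof.
move=> hv; rewrite /hat_part ge_max hv andbT.
apply: le_trans (floor_le _) _; rewrite lerBlDr lerDl; exact: ltW rbar_gt0.
Qed.

Lemma hat_int v : hat_part rbar v \is a Num.int.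
Proof.
rewrite /hat_part /Num.max; case: ifP => _; first exact: rpred0.
by rewrite rpred_int.
Qed.

Lemma hat_mono u v : u <= v -> hat_part rbar u <= hat_part rbar v.
Proof.
move=> huv; rewrite /hat_part ge_max !le_max lexx !orbT andbT.
by rewrite ler_int le_floor // lerD2r.
Qed.

Lemma hat_small v : v < rbar -> hat_part rbar v = 0.
Proof.
move=> hv; apply/eqP; rewrite eq_le hat_ge0 andbT /hat_part ge_max lexx andbT.
rewrite lerz0; apply: ltW; rewrite floor_lt0 subr_lt0 //.
Qed.

Lemma hat0 : hat_part rbar 0 = 0.
Proof. exact: hat_small rbar_gt0. Qed.

Lemma dot_big v : rbar <= v -> rbar <= v - hat_part rbar v.
Proof.
move=> hv; have h0 : 0 <= Num.floor (v - rbar) by rewrite floor_ge0 subr_ge0.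
rewrite /hat_part; have -> : Num.max (Num.floor (v - rbar))%:~R 0 = (Num.floor (v - rbar))%:~R :> R.
  by apply/max_idPl; rewrite ler0z.
by rewrite lerBrDr addrC -lerBrDr floor_le.
Qed.

Lemma dot_le v : 0 <= v -> v - hat_part rbar v <= rbar + 1.
Proof.
move=> hv; case: (ltP v rbar) => h.
  by rewrite hat_small // subr0; apply: ltW; apply: lt_le_trans h _; rewrite lerDl.
have h0 : 0 <= Num.floor (v - rbar) by rewrite floor_ge0 subr_ge0.
rewrite /hat_part; have -> : Num.max (Num.floor (v - rbar))%:~R 0 = (Num.floor (v - rbar))%:~R :> R.
  by apply/max_idPl; rewrite ler0z.
have := floorD1_gt (v - rbar); rewrite intrD.
move: ((Num.floor (v - rbar))%:~R : R) => t ht; lra.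
Qed.

End Helpers.

Theorem lemma6 (R : archiRealFieldType) (F C : finType)
    (f : F -> R) (c : F -> C -> R) (r : C -> nat)
    (hf : forall i, 0 <= f i) (hc : ftfp_metric c)
    (xs : F -> C -> R) (ys : F -> R)
    (hopt : ftfp_lp_optimal f c (fun j => (r j)%:R) xs ys)
    (hcomplete : ftfp_complete xs ys)
    (htight : forall j, \sum_(i : F) xs i j = (r j)%:R)
    (rbar : R) (hrbar1 : 1 <= rbar) (hrbar2 : forall j, rbar <= (r j)%:R) :
  let yhat := fun i => hat_part rbar (ys i) in
  let xhat := fun i j => hat_part rbar (xs i j) in
  let ydot := fun i => ys i - yhat i in
  let xdot := fun i j => xs i j - xhat i j in
  let rhat := fun j => \sum_(i : F) xhat i j in
  let rdot := fun j => \sum_(i : F) xdot i j in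
  [/\ ftfp_integral_feasible rhat xhat yhat,
      ftfp_lp_feasible rdot xdot ydot,
      ftfp_lp_optimal f c rhat xhat yhat /\ ftfp_lp_optimal f c rdot xdot ydot
    & forall j, rbar <= rdot j /\ rdot j <= (rbar + 1) * #|F|%:R].
Proof.
move=> yhat xhat ydot xdot rhat rdot.
have [[hr hyx hx hy] _] := hopt.
have hxy i j : xs i j <= ys i by rewrite -subr_ge0.
have fhat : ftfp_lp_feasible rhat xhat yhat.
  split => //.
  - by move=> i j; rewrite subr_ge0 /xhat /yhat hat_mono.
  - by move=> i j; exact: hat_ge0.
  - by move=> i; exact: hat_ge0.
have fdot : ftfp_lp_feasible rdot xdot ydot.
  split => //.
  - move=> i j; rewrite /xdot /ydot /xhat /yhat.
    case: (hcomplete i j) => ->; last by rewrite subrr.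
    by rewrite hat0 // !subr0 subr_ge0 hat_le.
  - by move=> i j; rewrite subr_ge0 hat_le.
  - by move=> i; rewrite subr_ge0 hat_le.
have ex i j : xs i j = xhat i j + xdot i j by rewrite /xdot addrC subrK.
have ey i : ys i = yhat i + ydot i by rewrite /ydot addrC subrK.
have ex' i j : xs i j = xdot i j + xhat i j by rewrite addrC.
have ey' i : ys i = ydot i + yhat i by rewrite addrC.
have hsum j : (r j)%:R <= rhat j + rdot j by rewrite /rhat /rdot -big_split /=; apply: le_trans (hr j) _; apply: ler_sum => i _; rewrite -ex.
have [fd1 fd2 fd3 fd4] := fdot.
have [fh1 fh2 fh3 fh4] := fhat.
split => //.
- split => //; split => i *; exact: hat_int.
- split.
  + eapply opt_split; [exact: ex|exact: ey|exact: hopt|exact: fhat|exact: hsum|exact: fd2|exact: fd3|exact: fd4].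
  + eapply opt_split; [exact: ex'|exact: ey'|exact: hopt|exact: fdot| |exact: fh2|exact: fh3|exact: fh4].
    by move=> j; rewrite addrC hsum.
- move=> j; split.
  + case: (boolP [exists i, rbar <= xs i j]).
    * case/existsP => i hi; rewrite /rdot (bigD1 i) //= {1}/xdot /xhat.
      have hd : rbar <= xs i j - hat_part rbar (xs i j) by apply: dot_big. apply: le_trans hd _; rewrite lerDl.
      by apply: sumr_ge0 => k _; exact: fd3.
    * rewrite negb_exists => /forallP hall.
      have -> : rdot j = \sum_i xs i j.
        apply: eq_bigr => i _; rewrite /xdot /xhat hat_small ?subr0 //.
        by have := hall i; rewrite -ltNge.
      by rewrite htight.
  + rewrite /rdot mulr_natr.
    apply: le_trans (_ : \sum_(i : F) (rbar + 1) <= _); last by rewrite sumr_const.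
    apply: ler_sum => i _; apply: dot_le => //.
Qed.
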